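(* Let $n\ge 2k+1$, $k\ge1$, and let $U=(u_0,u_1,\dots,u_i)$ be a path in $J(n;k,k+1)$. Then: (i) if $i=3$, there is exactly one cycle of length $6$ in $J(n;k,k+1)$ containing $U$; (ii) if $i=2$ and $u_2\in V_1$, there are exactly $n-k-1$ cycles of length $6$ containing $U$; (iii) if $i=2$ and $u_2\in V_2$, there are exactly $k$ cycles of length $6$ containing $U$; (iv) if $i=1$, there are exactly $k(n-k-1)$ cycles of length $6$ containing $U$.
   Context: The doubled Johnson graph $J(n;k,k+1)$ is the bipartite graph with vertex set $V_1\cup V_2$, where $V_1=\binom{[n]}{k}$ and $V_2=\binom{[n]}{k+1}$ are the sets of $k$-subsets and $(k+1)$-subsets of $[n]=\{1,\dots,n\}$, and two vertices $u,v$ are adjacent iff $u\subset v$ or $v\subset u$. A path $(u_0,\dots,u_i)$ is a sequence of distinct vertices with consecutive ones adjacent; a cycle contains the path if it contains all its vertices and edges. *)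

(* Defs.v *)
From mathcomp Require Import all_boot.
Set Implicit Arguments. Unset Strict Implicit. Unset Printing Implicit Defensive.

Definition inV1 (n k : nat) (u : {set 'I_n}) : bool := #|u| == k.
Definition inV2 (n k : nat) (u : {set 'I_n}) : bool := #|u| == k.+1.
Definition jvert (n k : nat) (u : {set 'I_n}) : bool := inV1 k u || inV2 k u.

Definition jadj (n k : nat) : rel {set 'I_n} := fun u v =>
  (inV1 k u && inV2 k v && (u \subset v)) || (inV2 k u && inV1 k v && (v \subset u)).

Definition jpath (n k : nat) (p : seq {set 'I_n}) : bool :=
  match p with
  | [::] => false
  | x :: s => [&& all (@jvert n k) p, uniq p & path (@jadj n k) x s]
  end.

Definition path_edges (n : nat) (p : seq {set 'I_n}) : {set {set {set 'I_n}}} :=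
  [set:: [seq [set e.1; e.2] | e <- zip p (behead p)]].

Definition cycle_edges (n : nat) (c : seq {set 'I_n}) : {set {set {set 'I_n}}} :=
  match c with
  | [::] => set0
  | x :: _ => path_edges (rcons c x)
  end.

(* A cycle of length 6 in J(n;k,k+1), identified with its edge set E (so
   rotations/reflections of the vertex sequence give the same cycle), which
   contains the path U (all its vertices and all its edges). *)
Definition six_cycle_containing (n k : nat) (U : seq {set 'I_n})
    (E : {set {set {set 'I_n}}}) : bool :=
  [exists c : 6.-tuple {set 'I_n},
    [&& all (@jvert n k) c, uniq c, cycle (@jadj n k) c,
        E == cycle_edges c,
        all (fun u => u \in c) U & path_edges U \subset E]].

Definition num_six_cycles (n k : nat) (U : seq {set 'I_n}) : nat :=
  #|[set E | six_cycle_containing k U E]|.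

(* Main.v *)
Require Import Defs.
From mathcomp Require Import all_boot zify.
Set Implicit Arguments. Unset Strict Implicit. Unset Printing Implicit Defensive.

Lemma union_eq (T : finType) (X X' Y : {set T}) m :
  X \subset Y -> X' \subset Y -> #|X| = m -> #|X'| = m -> #|Y| = m.+1 ->
  X != X' -> X :|: X' = Y.
Proof.
move=> sX sX' cX cX' cY neq; apply/eqP; rewrite eqEcard subUset sX sX' /= cY.
have nsub : ~~ (X' \subset X).
  apply/negP => h; move: neq; rewrite eq_sym eqEcard h cX cX' leqnn //.
have : X \proper X :|: X' by rewrite properE subsetUl subUset subxx nsub.
by move/proper_card; rewrite cX.
Qed.

Lemma inter_eq (T : finType) (X Y Y' : {set T}) m :
  X \subset Y -> X \subset Y' -> #|X| = m -> #|Y| = m.+1 -> #|Y'| = m.+1 ->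
  Y != Y' -> X = Y :&: Y'.
Proof.
move=> sY sY' cX cY cY' neq; apply/eqP; rewrite eqEcard subsetI sY sY' /= cX.
have nsub : ~~ (Y \subset Y').
  apply/negP => h; move: neq; rewrite eqEcard h cY cY' leqnn //.
have : Y :&: Y' \proper Y by rewrite properE subsetIl subsetI subxx nsub.
by move/proper_card; rewrite cY.
Qed.

Lemma sub_eq_card (T : finType) (X Y : {set T}) : X \subset Y -> #|Y| <= #|X| -> X = Y.
Proof. by move=> s c; apply/eqP; rewrite eqEcard s c. Qed.

Lemma cards_sup n (B : {set 'I_n}) m : m <= n ->
  #|[set A : {set 'I_n} | B \subset A & #|A| == m]| = 'C(n - #|B|, n - m).
Proof.
move=> mn.
have cC : forall A : {set 'I_n}, #|~: A| = n - #|A|.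
  by move=> A; have := cardsC A; rewrite card_ord; lia.
have -> : [set A : {set 'I_n} | B \subset A & #|A| == m] =
          (@setC _) @: [set A : {set 'I_n} | A \subset ~: B & #|A| == n - m].
  apply/setP => A; rewrite inE; apply/andP/imsetP.
    case=> sBA /eqP cA; exists (~: A); last by rewrite setCK.
    by rewrite inE setCS sBA cC cA eqxx.
  case=> C; rewrite inE => /andP [sC /eqP cC'] ->.
  split; first by rewrite -setCS setCK.
  have : #|C| <= n by have := max_card C; rewrite card_ord.
  by rewrite cC cC'; move=> h; apply/eqP; lia.
rewrite card_imset; last exact: (@setC_inj _).
by rewrite cards_draws cC.
Qed.

Definition F (n k : nat) (S T : {set 'I_n}) : {set {set {set 'I_n}}} :=
  [set e | [exists X : {set 'I_n}, exists Y : {set 'I_n}, [&& e == [set X; Y], S \subset X, X \subset Y,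
                                   Y \subset T, #|X| == k & #|Y| == k.+1]]].

Record hex (n k : nat) (A1 B1 A2 B2 A3 B3 : {set 'I_n}) : Prop := Hex {
  kpos : 0 < k; cA1 : #|A1| = k; cA2 : #|A2| = k; cA3 : #|A3| = k;
  cB1 : #|B1| = k.+1; cB2 : #|B2| = k.+1; cB3 : #|B3| = k.+1;
  s11 : A1 \subset B1; s21 : A2 \subset B1; s22 : A2 \subset B2;
  s32 : A3 \subset B2; s33 : A3 \subset B3; s13 : A1 \subset B3;
  dA12 : A1 != A2; dA23 : A2 != A3; dA31 : A3 != A1;
  dB12 : B1 != B2; dB23 : B2 != B3; dB31 : B3 != B1 }.

Ltac fo := solve [ by [] | apply/orP; first [left; by [] | right; fo] ].

Section Hex.
Variables (n k : nat) (A1 B1 A2 B2 A3 B3 : {set 'I_n}).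
Hypothesis H : hex k A1 B1 A2 B2 A3 B3.

Lemma hB1 : B1 = A1 :|: A2.
Proof. by case: H => *; symmetry; apply: union_eq; eauto. Qed.
Lemma hB2 : B2 = A2 :|: A3.
Proof. by case: H => *; symmetry; apply: union_eq; eauto. Qed.
Lemma hB3 : B3 = A3 :|: A1.
Proof. by case: H => *; symmetry; apply: union_eq; eauto. Qed.
Lemma hA1 : A1 = B3 :&: B1.
Proof. by case: H => *; apply: inter_eq; eauto. Qed.
Lemma hA2 : A2 = B1 :&: B2.
Proof. by case: H => *; apply: inter_eq; eauto. Qed.
Lemma hA3 : A3 = B2 :&: B3.
Proof. by case: H => *; apply: inter_eq; eauto. Qed.

Definition hS := A1 :&: A2.
Definition hT := B1 :|: B2.

Lemma hcardS : #|hS| = k.-1.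
Proof.
have := cardsUI A1 A2; rewrite -hB1 (cB1 H) (cA1 H) (cA2 H) /hS; lia.
Qed.

Lemma hcardT : #|hT| = k.+2.
Proof.
have := cardsUI B1 B2; rewrite -hA2 (cB1 H) (cB2 H) (cA2 H) /hT; lia.
Qed.

Definition hV := [:: A1; B1; A2; B2; A3; B3].

Lemma between X : X \in hV -> (hS \subset X) && (X \subset hT).
Proof.
have SA1 : hS \subset A1 by exact: subsetIl.
have SA2 : hS \subset A2 by exact: subsetIr.
have B1T : B1 \subset hT by exact: subsetUl.
have B2T : B2 \subset hT by exact: subsetUr.
rewrite /hV !inE; case/or4P; [| | | case/orP; [|case/orP]]; move=> /eqP ->.
- by rewrite SA1 (subset_trans (s11 H) B1T).
- by rewrite B1T (subset_trans SA1 (s11 H)).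
- by rewrite SA2 (subset_trans (s21 H) B1T).
- by rewrite B2T (subset_trans SA2 (s22 H)).
- rewrite hA3 subsetI (subset_trans SA2 (s22 H)) (subset_trans SA1 (s13 H)) /=.
  exact: subset_trans (subsetIl _ _) B2T.
- rewrite hB3 subUset (subset_trans (s32 H) B2T) (subset_trans (s11 H) B1T) andbT /=.
  rewrite subsetU //; apply/orP; right; exact: SA1.
Qed.

Lemma classify (X : {set 'I_n}) : hS \subset X -> X \subset hT ->
  (#|X| == k) || (#|X| == k.+1) -> X \in hV.
Proof.
move=> SX XT /orP [] /eqP cX.
- have [x xX xS] : exists2 x, x \in X & x \notin hS.
    apply/subsetPn; apply/negP => h; have := subset_leq_card h.
    by rewrite cX hcardS; have := kpos H; lia.
  have cxS : #|x |: hS| = k by rewrite cardsU1 xS hcardS; have := kpos H; lia.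
  have xsX : x |: hS \subset X by rewrite subUset sub1set xX SX.
  have eX : X = x |: hS by symmetry; apply: sub_eq_card => //; rewrite cX cxS.
  have hv : forall A, A \in hV -> #|A| = k -> x \in A -> X = A.
    move=> A AV cA xA; rewrite eX; apply: sub_eq_card; last by rewrite cA cxS.
    by rewrite subUset sub1set xA; case/andP: (between AV) => ->.
  move/subsetP: XT => /(_ x xX); rewrite /hT hB1 hB2 !inE -!orbA.
  case/or4P => xA.
  + by rewrite (hv A1) /hV ?inE ?eqxx ?(cA1 H).
  + by rewrite (hv A2) /hV ?inE ?eqxx ?orbT ?(cA2 H).
  + by rewrite (hv A2) /hV ?inE ?eqxx ?orbT ?(cA2 H).
  + by rewrite (hv A3) /hV ?inE ?eqxx ?orbT ?(cA3 H).
- have [y yT yX] : exists2 y, y \in hT & y \notin X.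
    apply/subsetPn; apply/negP => h; have := subset_leq_card h.
    by rewrite cX hcardT; lia.
  have yS : y \notin hS by apply: contra yX; apply: (subsetP SX).
  have cTy : #|hT :\ y| = k.+1 by have := cardsD1 y hT; rewrite yT hcardT; lia.
  have XTy : X \subset hT :\ y.
    by apply/subsetP => z zX; rewrite in_setD1 (subsetP XT) // andbT; apply: contraNneq yX => <-.
  have eX : X = hT :\ y by apply: sub_eq_card => //; rewrite cX cTy.
  have hv : forall B, B \in hV -> #|B| = k.+1 -> y \notin B -> X = B.
    move=> B BV cB yB; rewrite eX; symmetry; apply: sub_eq_card; last by rewrite cB cTy.
    apply/subsetP => z zB; rewrite in_setD1; case/andP: (between BV) => _ /subsetP -> //.
    by rewrite andbT; apply: contraNneq yB => <-.
  move: yS; rewrite /hS {1}hA1 hA2 !inE !negb_and -!orbA.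
  case/or4P => yB.
  + by rewrite (hv B3) /hV ?inE ?eqxx ?orbT ?(cB3 H).
  + by rewrite (hv B1) /hV ?inE ?eqxx ?orbT ?(cB1 H).
  + by rewrite (hv B1) /hV ?inE ?eqxx ?orbT ?(cB1 H).
  + by rewrite (hv B2) /hV ?inE ?eqxx ?orbT ?(cB2 H).
Qed.

Definition hE := [:: [set A1; B1]; [set B1; A2]; [set A2; B2]; [set B2; A3];
                     [set A3; B3]; [set B3; A1]].

Lemma inF (A B : {set 'I_n}) : A \in hV -> B \in hV -> A \subset B ->
  #|A| = k -> #|B| = k.+1 -> [set A; B] \in F k hS hT.
Proof.
move=> AV BV AB cA cB; rewrite inE; apply/existsP; exists A; apply/existsP; exists B.
case/andP: (between AV) => -> _; case/andP: (between BV) => _ ->.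
by rewrite AB cA cB !eqxx.
Qed.

Lemma memV1 : A1 \in hV. Proof. by rewrite /hV !inE eqxx. Qed.
Lemma memV2 : B1 \in hV. Proof. by rewrite /hV !inE eqxx ?orbT. Qed.
Lemma memV3 : A2 \in hV. Proof. by rewrite /hV !inE eqxx ?orbT. Qed.
Lemma memV4 : B2 \in hV. Proof. by rewrite /hV !inE eqxx ?orbT. Qed.
Lemma memV5 : A3 \in hV. Proof. by rewrite /hV !inE eqxx ?orbT. Qed.
Lemma memV6 : B3 \in hV. Proof. by rewrite /hV !inE eqxx ?orbT. Qed.

Lemma classA (X : {set 'I_n}) : X \in hV -> #|X| = k -> [\/ X = A1, X = A2 | X = A3].
Proof.
rewrite /hV !inE => + cX.
case/or4P; [| | | case/orP; [|case/orP]]; move=> /eqP eX; subst X;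
  first [by constructor 1 | by constructor 2 | by constructor 3
        | by move: cX; rewrite ?(cB1 H) ?(cB2 H) ?(cB3 H); lia].
Qed.
Lemma classB (X : {set 'I_n}) : X \in hV -> #|X| = k.+1 -> [\/ X = B1, X = B2 | X = B3].
Proof.
rewrite /hV !inE => + cX.
case/or4P; [| | | case/orP; [|case/orP]]; move=> /eqP eX; subst X;
  first [by constructor 1 | by constructor 2 | by constructor 3
        | by move: cX; rewrite ?(cA1 H) ?(cA2 H) ?(cA3 H); lia].
Qed.

Lemma edgesF e : (e \in F k hS hT) = (e \in hE).
Proof.
apply/idP/idP.
  rewrite inE => /existsP [X /existsP [Y /and5P [/eqP -> SX XY YT /andP [/eqP cX /eqP cY]]]].
  have XT : X \subset hT by exact: subset_trans XY YT.
  have SY : hS \subset Y by exact: subset_trans SX XY.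
  have XV : X \in hV by apply: classify => //; rewrite cX eqxx.
  have YV : Y \in hV by apply: classify => //; rewrite cY eqxx orbT.
  have bad : forall A A' B B' : {set 'I_n}, A \subset B -> A \subset B' -> A' = B :&: B' ->
     #|A| = k -> #|A'| = k -> A != A' -> False.
    move=> A A' B B' AB AB' eA' cA cA' /eqP; apply; apply: sub_eq_card.
      by rewrite eA' subsetI AB AB'.
    by rewrite cA cA'.
  move: XY; case: (classA XV cX) => ->; case: (classB YV cY) => -> XY'; rewrite /hE !inE.
  - by first [fo | rewrite setUC; fo].
  - by exfalso; exact: (bad A1 A2 B1 B2 (s11 H) XY' hA2 (cA1 H) (cA2 H) (dA12 H)).
  - by first [fo | rewrite setUC; fo].
  - by first [fo | rewrite setUC; fo].
  - by first [fo | rewrite setUC; fo].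
  - by exfalso; apply: (bad A2 A1 B1 B3 (s21 H) XY' _ (cA2 H) (cA1 H)); [rewrite setIC; exact: hA1 | rewrite eq_sym; exact: dA12 H].
  - by exfalso; apply: (bad A3 A2 B1 B2 XY' (s32 H) hA2 (cA3 H) (cA2 H)); rewrite eq_sym; exact: dA23 H.
  - by first [fo | rewrite setUC; fo].
  - by first [fo | rewrite setUC; fo].
move=> eH; rewrite /hE !inE in eH; move: eH; case/or4P; [| | | case/orP; [|case/orP]]; move=> /eqP ->;
  rewrite ?[[set B1; A2]]setUC ?[[set B2; A3]]setUC ?[[set B3; A1]]setUC;
  apply: inF; by [apply: memV1|apply: memV2|apply: memV3|apply: memV4|apply: memV5|apply: memV6
     | case: H].
Qed.
End Hex.

Lemma neq_by (T : finType) (X Y : {set T}) x : x \in X -> x \notin Y -> X != Y.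
Proof. by move=> xX xY; apply: contraNneq xY => <-. Qed.

Section J.
Variables (n k : nat).

Lemma v12 (x : {set 'I_n}) : inV1 k x -> ~~ inV2 k x.
Proof. by rewrite /inV1 /inV2 => /eqP ->; rewrite eqn_leq ltnn andbF. Qed.

Lemma adj1 (x y : {set 'I_n}) : inV1 k x -> jadj k x y -> inV2 k y && (x \subset y).
Proof.
move=> hx; rewrite /jadj hx (negbTE (v12 hx)) /= orbF => /andP [] -> ->. by [].
Qed.

Lemma adj2 (x y : {set 'I_n}) : inV2 k x -> jadj k x y -> inV1 k y && (y \subset x).
Proof.
move=> hx; rewrite /jadj hx.
have -> : inV1 k x = false by apply: negbTE; apply: contraL hx; exact: v12.
by rewrite /= => /andP [] -> ->.
Qed.

Lemma cycle_edges6 (v0 v1 v2 v3 v4 v5 : {set 'I_n}) e :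
  (e \in path_edges [:: v0; v1; v2; v3; v4; v5; v0]) =
  (e \in [:: [set v0; v1]; [set v1; v2]; [set v2; v3]; [set v3; v4]; [set v4; v5]; [set v5; v0]]).
Proof. by rewrite /path_edges /= inE. Qed.

Lemma cycle_hex (c : 6.-tuple {set 'I_n}) : 0 < k ->
  all (@jvert n k) c -> uniq c -> cycle (@jadj n k) c ->
  exists S T : {set 'I_n}, [/\ #|S| = k.-1, #|T| = k.+2,
     forall e, (e \in cycle_edges c) = (e \in F k S T) &
     forall X, X \in c -> (S \subset X) && (X \subset T)].
Proof.
move=> kp.
case: c => [[|v0 [|v1 [|v2 [|v3 [|v4 [|v5 [|]]]]]]]] sP //=.
rewrite !andbT !inE !negb_or.
move=> /and4P [j0 j1 j2 /and3P [j3 j4 j5]].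
move=> /and5P [/and5P [d01 d02 d03 d04 d05] /and4P [d12 d13 d14 d15] /and3P [d23 d24 d25] /andP [d34 d35] d45].
move=> /and5P [a01 a12 a23 a34 /andP [a45 a50]].
case/orP: j0 => h0.
- case/andP: (adj1 h0 a01) => h1 s01.
  case/andP: (adj2 h1 a12) => h2 s21.
  case/andP: (adj1 h2 a23) => h3 s23.
  case/andP: (adj2 h3 a34) => h4 s43.
  case/andP: (adj1 h4 a45) => h5 s45.
  case/andP: (adj2 h5 a50) => _ s05.
  have H : hex k v0 v1 v2 v3 v4 v5.
    by constructor; first [ exact: kp | apply/eqP; assumption | assumption | rewrite eq_sym; assumption ].
  exists (hS v0 v2), (hT v1 v3); split.
  + exact: hcardS H.
  + exact: hcardT H.
  + by move=> e; rewrite cycle_edges6 (edgesF H).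
  + by move=> X XV; apply: (between H).
- case/andP: (adj2 h0 a01) => h1 s10.
  case/andP: (adj1 h1 a12) => h2 s12.
  case/andP: (adj2 h2 a23) => h3 s32.
  case/andP: (adj1 h3 a34) => h4 s34.
  case/andP: (adj2 h4 a45) => h5 s54.
  case/andP: (adj1 h5 a50) => _ s50.
  have H : hex k v1 v2 v3 v4 v5 v0.
    by constructor; first [ exact: kp | apply/eqP; assumption | assumption | rewrite eq_sym; assumption ].
  exists (hS v1 v3), (hT v2 v4); split.
  + exact: hcardS H.
  + exact: hcardT H.
  + by move=> e; rewrite cycle_edges6 (edgesF H) -[in RHS](mem_rot 5).
  + by move=> X XV; apply: (between H); rewrite -(mem_rot 5).
Qed.

Lemma neqc (X Y : {set 'I_n}) a b : #|X| = a -> #|Y| = b -> a != b -> X != Y.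
Proof. by move=> cX cY ab; apply/eqP => e; move: ab; rewrite -cX -cY e eqxx. Qed.

Lemma jadjAB (X Y : {set 'I_n}) : #|X| = k -> #|Y| = k.+1 -> X \subset Y -> jadj k X Y.
Proof. by move=> cX cY XY; rewrite /jadj /inV1 /inV2 cX cY XY !eqxx. Qed.
Lemma jadjBA (X Y : {set 'I_n}) : #|X| = k.+1 -> #|Y| = k -> Y \subset X -> jadj k X Y.
Proof. by move=> cX cY XY; rewrite /jadj /inV1 /inV2 cX cY XY !eqxx orbT. Qed.

Lemma memF_sub (S T Z : {set 'I_n}) e : e \in F k S T -> Z \in e -> (S \subset Z) && (Z \subset T).
Proof.
rewrite inE => /existsP [X /existsP [Y /and5P [/eqP -> SX XY YT _]]].
by case/set2P => ->; [rewrite SX (subset_trans XY YT) | rewrite YT (subset_trans SX XY)].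
Qed.

Lemma hex_of (S T : {set 'I_n}) : 0 < k -> S \subset T -> #|S| = k.-1 -> #|T| = k.+2 ->
  exists A1 B1 A2 B2 A3 B3, [/\ hex k A1 B1 A2 B2 A3 B3, hS A1 A2 = S & hT B1 B2 = T].
Proof.
move=> kp ST cS cT.
have cD : #|T :\: S| = 3 by rewrite cardsDS // cT cS; lia.
have : 2 < #|T :\: S| by rewrite cD.
case/(@card_gt2P 'I_n) => a [b [c [[ma mb mc] [ab bc ca]]]].
have ac : a != c by rewrite eq_sym.
rewrite !inE in ma mb mc; case/andP: ma => aS aT; case/andP: mb => bS bT; case/andP: mc => cS' cT'.
have eqab := negbTE ab; have eqac := negbTE ac; have eqbc := negbTE bc.
have eqba : (b == a) = false by rewrite eq_sym.
have eqca : (c == a) = false by rewrite eq_sym.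
have eqcb : (c == b) = false by rewrite eq_sym.
have eqaS := negbTE aS; have eqbS := negbTE bS; have eqcS := negbTE cS'.
have c1 : forall x, x \notin S -> #|x |: S| = k.
  by move=> x xS; rewrite cardsU1 xS cS /= add1n prednK.
have c2 : forall x y, x != y -> x \notin S -> y \notin S -> #|x |: (y |: S)| = k.+1.
  move=> x y xy xS yS.
  have xyS : x \notin y |: S by rewrite in_setU1 negb_or xy xS.
  by rewrite cardsU1 xyS cardsU1 yS cS /= !add1n prednK.
have sub : forall x y, (x |: S) \subset (x |: (y |: S)) /\ (x |: S) \subset (y |: (x |: S)).
  by move=> x y; split; apply/subsetP => z; rewrite !inE => /orP [] ->; rewrite ?orbT.
have H : @hex n k (a |: S) (a |: (b |: S)) (b |: S) (b |: (c |: S)) (c |: S) (c |: (a |: S)).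
  apply: (@Hex n k).
  - exact: kp.
  - by apply: c1.
  - by apply: c1.
  - by apply: c1.
  - by apply: c2.
  - by apply: c2.
  - by apply: c2; rewrite // eq_sym.
  - exact: (sub a b).1.
  - exact: (sub b a).2.
  - exact: (sub b c).1.
  - exact: (sub c b).2.
  - exact: (sub c a).1.
  - exact: (sub a c).2.
  - by apply: (neq_by (x:=a)); rewrite !inE ?eqxx ?eqab ?eqac ?eqbc ?eqba ?eqca ?eqcb ?eqaS ?eqbS ?eqcS ?orbT.
  - by apply: (neq_by (x:=b)); rewrite !inE ?eqxx ?eqab ?eqac ?eqbc ?eqba ?eqca ?eqcb ?eqaS ?eqbS ?eqcS ?orbT.
  - by apply: (neq_by (x:=c)); rewrite !inE ?eqxx ?eqab ?eqac ?eqbc ?eqba ?eqca ?eqcb ?eqaS ?eqbS ?eqcS ?orbT.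
  - by apply: (neq_by (x:=a)); rewrite !inE ?eqxx ?eqab ?eqac ?eqbc ?eqba ?eqca ?eqcb ?eqaS ?eqbS ?eqcS ?orbT.
  - by apply: (neq_by (x:=b)); rewrite !inE ?eqxx ?eqab ?eqac ?eqbc ?eqba ?eqca ?eqcb ?eqaS ?eqbS ?eqcS ?orbT.
  - by apply: (neq_by (x:=c)); rewrite !inE ?eqxx ?eqab ?eqac ?eqbc ?eqba ?eqca ?eqcb ?eqaS ?eqbS ?eqcS ?orbT.
exists (a |: S), (a |: (b |: S)), (b |: S), (b |: (c |: S)), (c |: S), (c |: (a |: S)); split => //.
  by apply: esym; apply: sub_eq_card; rewrite ?(hcardS H) ?cS // /hS subsetI !subsetUr.
apply: sub_eq_card; last by rewrite (hcardT H) cT.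
by rewrite /hT !subUset !sub1set aT bT cT' ST.
Qed.
End J.

Section K.
Variables (n k : nat).

Lemma cycle_of (S T : {set 'I_n}) : 0 < k -> S \subset T -> #|S| = k.-1 -> #|T| = k.+2 ->
  exists c : 6.-tuple {set 'I_n}, [/\ all (@jvert n k) c, uniq c, cycle (@jadj n k) c,
     forall e, (e \in cycle_edges c) = (e \in F k S T) &
     forall X, jvert k X -> S \subset X -> X \subset T -> X \in c].
Proof.
move=> kp ST cS cT; have [A1 [B1 [A2 [B2 [A3 [B3 [H eS eT]]]]]]] := hex_of kp ST cS cT.
exists [tuple A1; B1; A2; B2; A3; B3]; split.
- by rewrite /= /jvert /inV1 /inV2 (cA1 H) (cB1 H) (cA2 H) (cB2 H) (cA3 H) (cB3 H) !eqxx ?orbT.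
- have k1 : k != k.+1 by rewrite eqn_leq ltnn andbF.
  have k2 : k.+1 != k by rewrite eq_sym.
  rewrite /= !inE !negb_or.
  rewrite (neqc (cA1 H) (cB1 H) k1) (neqc (cA1 H) (cB2 H) k1) (neqc (cA1 H) (cB3 H) k1).
  rewrite (neqc (cB1 H) (cA2 H) k2) (neqc (cB1 H) (cA3 H) k2).
  rewrite (neqc (cA2 H) (cB2 H) k1) (neqc (cA2 H) (cB3 H) k1).
  rewrite (neqc (cB2 H) (cA3 H) k2) (neqc (cA3 H) (cB3 H) k1).
  rewrite (dA12 H) (dA23 H) (dB12 H) (dB23 H) eq_sym (dA31 H) eq_sym (dB31 H).
  by [].
- rewrite /= (jadjAB (cA1 H) (cB1 H) (s11 H)) (jadjBA (cB1 H) (cA2 H) (s21 H)).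
  rewrite (jadjAB (cA2 H) (cB2 H) (s22 H)) (jadjBA (cB2 H) (cA3 H) (s32 H)).
  by rewrite (jadjAB (cA3 H) (cB3 H) (s33 H)) (jadjBA (cB3 H) (cA1 H) (s13 H)).
- by move=> e; rewrite -eS -eT (edgesF H) /= cycle_edges6.
- move=> X jX SX XT; rewrite -eS in SX; rewrite -eT in XT; exact: (classify H SX XT jX).
Qed.

Lemma F_inj (S T S' T' : {set 'I_n}) : 0 < k -> S \subset T -> #|S| = k.-1 -> #|T| = k.+2 ->
  #|S'| = k.-1 -> #|T'| = k.+2 -> F k S T = F k S' T' -> S = S' /\ T = T'.
Proof.
move=> kp ST cS cT cS' cT' eF.
have [A1 [B1 [A2 [B2 [A3 [B3 [H eS eT]]]]]]] := hex_of kp ST cS cT.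
have mem : forall e, e \in hE A1 B1 A2 B2 A3 B3 -> e \in F k S' T'.
  by move=> e he; rewrite -eF -eS -eT (edgesF H).
have e1 : [set A1; B1] \in F k S' T' by apply: mem; rewrite /hE !inE; fo.
have e2 : [set B1; A2] \in F k S' T' by apply: mem; rewrite /hE !inE; fo.
have e3 : [set A2; B2] \in F k S' T' by apply: mem; rewrite /hE !inE; fo.
case/andP: (memF_sub e1 (set21 _ _)) => SA1 _.
case/andP: (memF_sub e2 (set22 _ _)) => SA2 _.
case/andP: (memF_sub e1 (set22 _ _)) => _ B1T.
case/andP: (memF_sub e3 (set22 _ _)) => _ B2T.
split.
- apply: esym; apply: sub_eq_card; last by rewrite cS cS'.
  by rewrite -eS /hS subsetI SA1 SA2.
- apply: sub_eq_card; last by rewrite cT cT'.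
  by rewrite -eT /hT subUset B1T B2T.
Qed.

Lemma adjF (S T x y : {set 'I_n}) : jadj k x y -> S \subset x -> x \subset T ->
  S \subset y -> y \subset T -> [set x; y] \in F k S T.
Proof.
move=> + Sx xT Sy yT; rewrite /jadj /inV1 /inV2 => /orP [/andP [/andP [cx cy] xy] | /andP [/andP [cx cy] yx]].
- rewrite inE; apply/existsP; exists x; apply/existsP; exists y.
  by rewrite eqxx Sx xy yT cx cy.
- rewrite inE; apply/existsP; exists y; apply/existsP; exists x.
  by rewrite setUC eqxx Sy yx xT cx cy.
Qed.

Lemma path_edgesF (S T : {set 'I_n}) x p : path (@jadj n k) x p ->
  all (fun u : {set 'I_n} => (S \subset u) && (u \subset T)) (x :: p) -> path_edges (x :: p) \subset F k S T.
Proof.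
elim: p x => [|y p IH] x /=.
  by move=> _ _; apply/subsetP => e; rewrite /path_edges /= inE.
move=> /andP [axy pp] /and3P [/andP [Sx xT] /andP [Sy yT] rest].
apply/subsetP => e; rewrite /path_edges /= inE in_cons => /orP [/eqP -> | he].
  exact: adjF.
have : e \in path_edges (y :: p) by rewrite /path_edges inE.
by apply/subsetP; apply: IH => //=; rewrite Sy yT.
Qed.

End K.

Section L.
Variables (n k : nat).

Definition P (U : seq {set 'I_n}) : {set {set 'I_n} * {set 'I_n}} :=
  [set p : {set 'I_n} * {set 'I_n} | [&& #|p.1| == k.-1, #|p.2| == k.+2 &
             all (fun u : {set 'I_n} => (p.1 \subset u) && (u \subset p.2)) U]].

Lemma main_eq (U : seq {set 'I_n}) : 0 < k -> jpath k U ->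
  [set E | six_cycle_containing k U E] = [set F k p.1 p.2 | p in P U].
Proof.
move=> kp hU; apply/setP => E; rewrite inE; apply/idP/imsetP.
- case/existsP => c /and5P [jc uc cc /eqP eE /andP [allU sub]].
  have [S [T [cS cT hEd hV]]] := cycle_hex kp jc uc cc.
  exists (S, T); last by apply/setP => e; rewrite eE hEd.
  rewrite inE /= cS cT !eqxx /=; apply/allP => u uU.
  exact: hV u ((allP allU) u uU).
- case => [[S T]]; rewrite inE /= => /and3P [/eqP cS /eqP cT allU] ->.
  case: U hU allU => [|u0 U'] // hU allU.
  have ST : S \subset T.
    by move: allU => /= /andP [/andP [Su uT] _]; exact: subset_trans Su uT.
  have [c [jc uc cc hEd hV]] := cycle_of kp ST cS cT.
  case/and3P: hU => jU _ pU.
  apply/existsP; exists c; rewrite jc uc cc !andTb.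
  apply/and3P; split.
  + by apply/eqP/setP => e; rewrite hEd.
  + apply/allP => u uU; case/andP: ((allP allU) u uU) => Su uT.
    by apply: hV => //; exact: (allP jU).
  + exact: path_edgesF.
Qed.

Lemma count_P (U : seq {set 'I_n}) : 0 < k -> jpath k U -> num_six_cycles k U = #|P U|.
Proof.
move=> kp hU; rewrite /num_six_cycles main_eq // card_in_imset //.
move=> [S T] [S' T']; rewrite !inE /= => /and3P [/eqP cS /eqP cT allU] /and3P [/eqP cS' /eqP cT' _] eF.
case: U hU allU => [|u0 U'] // hU allU.
have ST : S \subset T.
  by move: allU => /= /andP [/andP [Su uT] _]; exact: subset_trans Su uT.
by have [-> ->] := F_inj kp ST cS cT cS' cT' eF.
Qed.

Lemma all_big (S T : {set 'I_n}) (U : seq {set 'I_n}) :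
  all (fun u : {set 'I_n} => (S \subset u) && (u \subset T)) U =
  (S \subset \bigcap_(u <- U) u) && (\bigcup_(u <- U) u \subset T).
Proof.
elim: U => [|u U IH] /=; first by rewrite !big_nil subsetT sub0set.
by rewrite !big_cons IH subsetI subUset; case: (S \subset u); case: (u \subset T);
  case: (S \subset _); case: (_ \subset T).
Qed.

Lemma card_P (U : seq {set 'I_n}) : k.+2 <= n ->
  #|P U| = 'C(#|\bigcap_(u <- U) u|, k.-1) * 'C(n - #|\bigcup_(u <- U) u|, n - k.+2).
Proof.
move=> kn.
have -> : P U = setX [set S : {set 'I_n} | S \subset \bigcap_(u <- U) u & #|S| == k.-1]
                     [set T : {set 'I_n} | \bigcup_(u <- U) u \subset T & #|T| == k.+2].
  apply/setP => [[S T]]; rewrite !inE /= all_big.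
  by case: (S \subset _); case: (_ \subset T); case: (#|S| == _); case: (#|T| == _).
by rewrite cardsX cards_draws cards_sup.
Qed.

End L.

Lemma adjr1 n k (x y : {set 'I_n}) : inV1 k y -> jadj k x y -> inV2 k x && (y \subset x).
Proof.
move=> hy; rewrite /jadj hy (negbTE (v12 hy)) /= andbF /= andbT => /andP [] -> ->. by [].
Qed.
Lemma adjr2 n k (x y : {set 'I_n}) : inV2 k y -> jadj k x y -> inV1 k x && (x \subset y).
Proof.
move=> hy; rewrite /jadj hy.
have -> : inV1 k y = false by apply: negbTE; apply: contraL hy; exact: v12.
by rewrite /= !andbF orbF andbT => /andP [] -> ->.
Qed.

Theorem proposition2p1 (n k : nat) (hk : 1 <= k) (hn : 2 * k + 1 <= n)
    (U : seq {set 'I_n}) (hU : jpath k U) :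
  (size U = 4 -> num_six_cycles k U = 1) /\
  (size U = 3 -> inV1 k (nth set0 U 2) -> num_six_cycles k U = n - k - 1) /\
  (size U = 3 -> inV2 k (nth set0 U 2) -> num_six_cycles k U = k) /\
  (size U = 2 -> num_six_cycles k U = k * (n - k - 1)).
Proof.
have kn : k.+2 <= n by lia.
have e1 : 'C(k, k.-1) = k by rewrite -{1}(prednK hk) binSn prednK.
have e2 : 'C(n - k.+1, n - k.+2) = n - k - 1.
  have -> : n - k.+1 = (n - k.+2).+1 by lia.
  by rewrite binSn; lia.
rewrite (count_P hk hU) card_P //.
have cI : forall (A B C : {set 'I_n}), A \subset B -> C \subset B -> #|A| = k -> #|C| = k ->
    #|B| = k.+1 -> A != C -> #|A :&: C| = k.-1.
  move=> A B C AB CB cA cC cB AC; have := cardsUI A C.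
  by rewrite (union_eq AB CB cA cC cB AC) cA cC cB; lia.
have cU : forall (A B C : {set 'I_n}), B \subset A -> B \subset C -> #|A| = k.+1 -> #|C| = k.+1 ->
    #|B| = k -> A != C -> #|A :|: C| = k.+2.
  move=> A B C BA BC cA cC cB AC; have := cardsUI A C.
  by rewrite -(inter_eq BA BC cB cA cC AC) cA cC cB; lia.
case: U hU => [|u0 [|u1 [|u2 [|u3 [|u4 U]]]]] // hU;
  try (by split; [|split; [|split]]; move=> /eqP);
  rewrite /jpath /= in hU; rewrite !big_cons !big_nil setIT setU0.
-
  split => //; split => //; split => // _.
  case/and3P: hU => /andP [j0 _] _ /andP [a01 _].
  case/orP: j0 => h0.
  + case/andP: (adj1 h0 a01) => /eqP h1 s01.
    by rewrite (setIidPl s01) (setUidPr s01) (eqP h0) h1 e1 e2.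
  + case/andP: (adj2 h0 a01) => /eqP h1 s10.
    by rewrite (setIidPr s10) (setUidPl s10) (eqP h0) h1 e1 e2.
-
  case/and3P: hU => /and3P [j0 j1 _] u /and3P [a01 a12 _].
  move: u; rewrite !inE !negb_or andbT => /andP [/andP [d01 d02] d12].
  split => //; split; last split => //.
  + move=> _ h2.
    case/andP: (adjr1 h2 a12) => h1 s21.
    case/andP: (adjr2 h1 a01) => h0 s01.
    rewrite (setIidPr s21) (setUidPl s21) (setUidPr s01) (eqP h1).
    rewrite (cI u0 u1 u2) //; try exact/eqP.
    by rewrite binn mul1n e2.
  + move=> _ h2.
    case/andP: (adjr2 h2 a12) => h1 s12.
    case/andP: (adjr1 h1 a01) => h0 s10.
    rewrite (setIidPl s12) (setIidPr s10) (setUidPr s12) (eqP h1).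
    rewrite (cU u0 u1 u2) //; try exact/eqP.
    by rewrite binn muln1 e1.
-
  split => // _.
  case/and3P: hU => /and4P [j0 j1 j2 _] u /and4P [a01 a12 a23 _].
  move: u; rewrite !inE !negb_or andbT => /and3P [/and3P [d01 d02 d03] /andP [d12 d13] d23].
  case/orP: j0 => h0.
  + case/andP: (adj1 h0 a01) => h1 s01.
    case/andP: (adj2 h1 a12) => h2 s21.
    case/andP: (adj1 h2 a23) => h3 s23.
    rewrite (setIidPl s23) [u1 :&: u2](setIidPr s21) (setUidPr s23).
    rewrite (cI u0 u1 u2) //; try exact/eqP.
    have h03 : u0 \subset u1 :|: u3 by exact: subset_trans s01 (subsetUl _ _).
    rewrite (setUidPr h03).
    rewrite (cU u1 u2 u3) //; try exact/eqP.
    by rewrite !binn.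
  + case/andP: (adj2 h0 a01) => h1 s10.
    case/andP: (adj1 h1 a12) => h2 s12.
    case/andP: (adj2 h2 a23) => h3 s32.
    rewrite (setIidPr s32) (setUidPl s32) (setUidPr s12).
    have h03 : u1 :&: u3 \subset u0 by exact: subset_trans (subsetIl _ _) s10.
    rewrite (setIidPr h03).
    rewrite (cI u1 u2 u3) //; try exact/eqP.
    rewrite (cU u0 u1 u2) //; try exact/eqP.
    by rewrite !binn.
Qed.
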